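(* There is an absolute constant $C$ such that for every $n$, every $b\in\mathbb R$, every $w\in\mathbb R^n$ and every $\epsilon>0$, the budget-additive function $f(x)=\min(b,\sum_{i=1}^nw_ix_i)$ on $\{0,1\}^n$ satisfies $R^{lin}_{\epsilon\text{-approx}}(f)\le C\min\left(\lceil\|w\|_1^2/\epsilon\rceil,\ n\right)$.
   Context: For $S\subseteq[n]$, $\chi_S(x)=\sum_{i\in S}x_i\pmod2$. Approximate randomized $\mathbb F_2$-sketch complexity: $R^{lin}_{\epsilon\text{-approx}}(f)$ is the smallest integer $k$ such that there exist a probability distribution over $k$-tuples of subsets $\mathbf S_1,\dots,\mathbf S_k\subseteq[n]$ and $g\colon\mathbb F_2^k\to\mathbb R$ with $\mathbb E_{\mathbf S_1,\dots,\mathbf S_k}[(g(\chi_{\mathbf S_1}(x),\dots,\chi_{\mathbf S_k}(x))-f(x))^2]\le\epsilon$ for every $x\in\mathbb F_2^n$. $\|w\|_1=\sum_i|w_i|$. *)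

(* Defs.v *)
(* Reals are modelled by an arbitrary archimedean field R. *)
From HB Require Import structures.
From mathcomp Require Import all_boot all_order all_algebra.
Set Implicit Arguments. Unset Strict Implicit. Unset Printing Implicit Defensive.
Import Order.TTheory GRing.Theory Num.Theory.
Local Open Scope ring_scope.

(* F_2 is modelled by bool (addition = addb); F_2^n = {ffun 'I_n -> bool}. *)
Definition chi (n : nat) (S : {set 'I_n}) (x : {ffun 'I_n -> bool}) : bool :=
  \big[addb/false]_(i in S) x i.

Definition sketch (n k : nat) (S : {ffun 'I_k -> {set 'I_n}})
  (x : {ffun 'I_n -> bool}) : {ffun 'I_k -> bool} :=
  [ffun j => chi (S j) x].

Definition is_distr (R : numDomainType) (T : finType) (p : T -> R) : Prop :=
  (forall t, 0 <= p t) /\ \sum_(t : T) p t = 1.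

Definition approx_sketchable (R : numDomainType) (n : nat)
  (f : {ffun 'I_n -> bool} -> R) (eps : R) (k : nat) : Prop :=
  exists (p : {ffun 'I_k -> {set 'I_n}} -> R) (g : {ffun 'I_k -> bool} -> R),
    is_distr p /\
    forall x : {ffun 'I_n -> bool},
      \sum_(S : {ffun 'I_k -> {set 'I_n}}) p S * (g (sketch S x) - f x) ^+ 2 <= eps.

(* R^lin_{eps-approx}(f) <= m  iff  some k <= m admits such a sketch
   (R^lin is the smallest such k). *)
Definition Rlin_approx_le (R : numDomainType) (n : nat)
  (f : {ffun 'I_n -> bool} -> R) (eps : R) (m : int) : Prop :=
  exists k : nat, (k%:Z <= m) /\ approx_sketchable f eps k.

Definition budget_additive (R : realDomainType) (n : nat) (b : R) (w : 'I_n -> R)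
  (x : {ffun 'I_n -> bool}) : R :=
  Num.min b (\sum_(i < n) w i * (x i)%:R).

Definition l1norm (R : numDomainType) (n : nat) (w : 'I_n -> R) : R :=
  \sum_(i < n) `|w i|.

(* Main.v *)
Require Import Defs.
From HB Require Import structures.
From mathcomp Require Import all_boot all_order all_algebra.
From mathcomp Require Import ring lra zify.
Import Order.TTheory GRing.Theory Num.Theory.
Local Open Scope ring_scope.

Section Gen.
Variable R : realFieldType.

Lemma prod_expect (k : nat) (T : finType) (q F : 'I_k -> T -> R) :
  \sum_(S : {ffun 'I_k -> T}) (\prod_l q l (S l)) * \prod_l F l (S l)
  = \prod_l \sum_t q l t * F l t.
Proof.
rewrite bigA_distr_bigA /=; apply: eq_bigr => S _; by rewrite -big_split.
Qed.

Lemma prod1_if (k : nat) (l : 'I_k) (a : 'I_k -> R) :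
  \prod_j (if j == l then a j else 1) = a l.
Proof. by rewrite -big_mkcond big_pred1_eq. Qed.

Lemma variance (k : nat) (T : finType) (q : 'I_k -> T -> R) (Y : 'I_k -> T -> R)
  (d : 'I_k -> R) :
  (forall l, \sum_t q l t = 1) ->
  (forall l, \sum_t q l t * (Y l t - \sum_u q l u * Y l u) ^+ 2 <= d l) ->
  \sum_(S : {ffun 'I_k -> T}) (\prod_l q l (S l)) *
     (\sum_l (Y l (S l) - \sum_u q l u * Y l u)) ^+ 2 <= \sum_l d l.
Proof.
move=> q1 hd.
set Z := fun l t => Y l t - \sum_u q l u * Y l u.
have EZ : forall l, \sum_t q l t * Z l t = 0.
  move=> l; rewrite /Z; under eq_bigr do rewrite mulrBr.
  by rewrite sumrB -mulr_suml q1 mul1r subrr.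
have key : forall l l', \sum_(S : {ffun 'I_k -> T}) (\prod_j q j (S j)) * (Z l (S l) * Z l' (S l'))
   = if l == l' then \sum_t q l t * Z l t ^+ 2 else 0.
  move=> l l'.
  have eF : forall S : {ffun 'I_k -> T}, Z l (S l) * Z l' (S l') =
     \prod_j ((if j == l then Z l (S j) else 1) * (if j == l' then Z l' (S j) else 1)).
    move=> S; rewrite big_split /=.
    by rewrite (prod1_if _ l (fun j => Z l (S j))) (prod1_if _ l' (fun j => Z l' (S j))).
  under eq_bigr do rewrite eF.
  rewrite (prod_expect _ _ _ (fun j t => (if j == l then Z l t else 1) * (if j == l' then Z l' t else 1))).
  clear eF; case: eqP => [<-|nll].
    rewrite (bigD1 l) //= eqxx /= [X in _ * X]big1 ?mulr1; last first.
      move=> j /negbTE ->; under eq_bigr do rewrite !mulr1; exact: q1.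
    by apply: eq_bigr => t _; rewrite expr2.
  rewrite (bigD1 l') //= eqxx /=.
  have -> : (l' == l) = false by apply/eqP => h; apply: nll.
  by under eq_bigr do rewrite mul1r; rewrite EZ mul0r.
have expand : forall S : {ffun 'I_k -> T}, (\sum_l Z l (S l)) ^+ 2 =
   \sum_l \sum_l' Z l (S l) * Z l' (S l').
  by move=> S; rewrite expr2 mulr_suml; apply: eq_bigr => l _; rewrite mulr_sumr.
under eq_bigr do rewrite expand mulr_sumr.
rewrite exchange_big /=; apply: ler_sum => l _.
under eq_bigr do rewrite mulr_sumr.
rewrite exchange_big /=.
under eq_bigr do rewrite key.
rewrite (bigD1 l) //= eqxx [X in _ + X]big1 ?addr0; first exact: hd.
by move=> j; rewrite eq_sym => /negbTE ->.
Qed.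
End Gen.
Set Implicit Arguments. Unset Strict Implicit.
Lemma min_lip (R : realFieldType) (b A B : R) :
  (Num.min b A - Num.min b B) ^+ 2 <= (A - B) ^+ 2.
Proof.
case: (leP b A) => h1; case: (leP b B) => h2; rewrite ?subrr ?expr0n //=;
 try nra; exact: sqr_ge0.
Qed.

Lemma core (R : realFieldType) n (b : R) (w : 'I_n -> R) (eps : R) k
  (q : 'I_k -> {set 'I_n} -> R) (c d : 'I_k -> R) :
  (forall l t, 0 <= q l t) -> (forall l, \sum_t q l t = 1) ->
  (forall x, \sum_l (\sum_t q l t * (c l * (chi t x)%:R)) = \sum_(i < n) w i * (x i)%:R) ->
  (forall x l, \sum_t q l t * (c l * (chi t x)%:R - \sum_u q l u * (c l * (chi u x)%:R)) ^+ 2 <= d l) ->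
  \sum_l d l <= eps ->
  approx_sketchable (budget_additive b w) eps k.
Proof.
move=> q0 q1 hmu hd hde.
exists (fun S => \prod_l q l (S l)), (fun v : {ffun 'I_k -> bool} => Num.min b (\sum_l c l * (v l)%:R)).
split.
  split; first by move=> S; apply: prodr_ge0 => l _; exact: q0.
  by rewrite -bigA_distr_bigA big1 // => l _; exact: q1.
move=> x; apply: le_trans hde.
apply: le_trans (@variance R k _ q (fun l t => c l * (chi t x)%:R) d q1 (hd x)).
apply: ler_sum => S _; apply: ler_wpM2l; first by apply: prodr_ge0 => l _; exact: q0.
rewrite /budget_additive -hmu.
under eq_bigr do rewrite ffunE.
rewrite sumrB; exact: min_lip.
Qed.

Lemma pt_sum (R : realFieldType) (T : finType) (s : T) (F : T -> R) :
  \sum_t (t == s)%:R * F t = F s.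
Proof.
rewrite (bigD1 s) //= eqxx mul1r big1 ?addr0 // => t /negbTE ->; exact: mul0r.
Qed.

Lemma chi1 n (i : 'I_n) x : chi [set i] x = x i.
Proof. by rewrite /chi big_set1. Qed.

Lemma chi0 n x : chi (set0 : {set 'I_n}) x = false.
Proof. by rewrite /chi big_set0. Qed.

Definition qd (R : realFieldType) n (L : R) (v : 'I_n -> R) (t : {set 'I_n}) : R :=
  \sum_i (v i / L) * (t == [set i])%:R + (1 - \sum_i v i / L) * (t == set0)%:R.


Lemma qd_sum (R : realFieldType) n (L : R) (v : 'I_n -> R) (F : {set 'I_n} -> R) :
  \sum_t qd L v t * F t = \sum_i (v i / L) * F [set i] + (1 - \sum_i v i / L) * F set0.
Proof.
rewrite /qd; under eq_bigr do rewrite mulrDl.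
rewrite big_split /=; congr (_ + _).
  under eq_bigr do rewrite mulr_suml.
  rewrite exchange_big /=; apply: eq_bigr => i _.
  under eq_bigr do rewrite -mulrA.
  by rewrite -mulr_sumr pt_sum.
under eq_bigr do rewrite -mulrA.
by rewrite -mulr_sumr pt_sum.
Qed.

Lemma qd_1 (R : realFieldType) n (L : R) (v : 'I_n -> R) : \sum_t qd L v t = 1.
Proof.
have := qd_sum L v (fun _ => 1); under eq_bigr do rewrite mulr1.
move=> ->; under eq_bigr do rewrite mulr1; rewrite mulr1.
by rewrite addrC subrK.
Qed.

Lemma sumv_le1 (R : realFieldType) n (L : R) (v : 'I_n -> R) :
  0 < L -> \sum_i v i <= L -> \sum_i v i / L <= 1.
Proof. by move=> hL hs; rewrite -mulr_suml ler_pdivrMr // mul1r. Qed.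

Lemma qd_ge0 (R : realFieldType) n (L : R) (v : 'I_n -> R) t :
  0 < L -> (forall i, 0 <= v i) -> \sum_i v i <= L -> 0 <= qd L v t.
Proof.
move=> hL hv hs; rewrite /qd; apply: addr_ge0.
  apply: sumr_ge0 => i _; apply: mulr_ge0 => //; apply: divr_ge0 => //; exact: ltW.
apply: mulr_ge0 => //; rewrite subr_ge0; exact: sumv_le1.
Qed.

Lemma qd_mu (R : realFieldType) n (L : R) (v : 'I_n -> R) (c : R) x :
  \sum_t qd L v t * (c * (chi t x)%:R) = c * \sum_i v i / L * (x i)%:R.
Proof.
rewrite qd_sum chi0 mulr0 mulr0 addr0 mulr_sumr; apply: eq_bigr => i _.
by rewrite chi1 mulrCA.
Qed.

Lemma sq_bound (R : realFieldType) (c a b : R) :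
  0 <= a <= 1 -> 0 <= b <= 1 -> (c * b - c * a) ^+ 2 <= c ^+ 2.
Proof.
move=> /andP[a0 a1] /andP[b0 b1].
rewrite -mulrBr exprMn -[leRHS]mulr1; apply: ler_wpM2l; first exact: sqr_ge0.
nra.
Qed.

Lemma qd_var (R : realFieldType) n (L : R) (v : 'I_n -> R) (c : R) x :
  0 < L -> (forall i, 0 <= v i) -> \sum_i v i <= L ->
  \sum_t qd L v t * (c * (chi t x)%:R - \sum_u qd L v u * (c * (chi u x)%:R)) ^+ 2 <= c ^+ 2.
Proof.
move=> hL hv hs; rewrite qd_mu.
have ha : 0 <= \sum_i v i / L * (x i)%:R <= 1.
  apply/andP; split.
    apply: sumr_ge0 => i _; apply: mulr_ge0 => //; apply: divr_ge0 => //; exact: ltW.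
  apply: le_trans (sumv_le1 hL hs); apply: ler_sum => i _.
  rewrite -[leRHS]mulr1; apply: ler_wpM2l; first by apply: divr_ge0 => //; exact: ltW.
  by case: (x i).
apply: le_trans (_ : \sum_t qd L v t * c ^+ 2 <= _).
  apply: ler_sum => t _; apply: ler_wpM2l; first exact: qd_ge0.
  apply: sq_bound => //; by case: (chi t x); rewrite /= ?ler01 ?lexx.
by rewrite -mulr_suml qd_1 mul1r.
Qed.

Lemma ident_case (R : realFieldType) n (b : R) (w : 'I_n -> R) (eps : R) :
  0 < eps -> approx_sketchable (budget_additive b w) eps n.
Proof.
move=> he.
apply: (@core R n b w eps n (fun l t => (t == [set l])%:R) w (fun _ => 0)).
- by move=> l t; exact: ler0n.
- move=> l; have := pt_sum [set l] (fun _ => (1 : R)).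
  by under eq_bigr do rewrite mulr1.
- move=> x; apply: eq_bigr => l _.
  by rewrite (pt_sum [set l] (fun t => w l * (chi t x)%:R)) chi1.
- move=> x l.
  rewrite (pt_sum [set l] (fun t => w l * (chi t x)%:R)).
  rewrite (pt_sum [set l] (fun t => (w l * (chi t x)%:R - w l * (chi [set l] x)%:R) ^+ 2)).
  by rewrite subrr expr0n.
- by rewrite big1 // ltW.
Qed.

Lemma wpn (R : realFieldType) (a : R) : Num.max a 0 - Num.max (- a) 0 = a.
Proof.
case: (leP 0 a) => h.
  by rewrite max_r ?subr0 // oppr_le0.
by rewrite max_l ?sub0r ?opprK // oppr_ge0 ltW.
Qed.

Theorem mainTheorem16 :
  exists C : nat,
  forall (R : archiRealFieldType) (n : nat) (b : R) (w : 'I_n -> R) (eps : R),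
    0 < eps ->
    Rlin_approx_le (budget_additive b w) eps
      (C%:Z * Num.min (Num.ceil (l1norm w ^+ 2 / eps)) n%:Z).
Proof.
exists 4%N => R n b w eps heps.
set L := l1norm w; set m := Num.ceil (L ^+ 2 / eps).
have L0 : 0 <= L by apply: sumr_ge0 => i _; exact: normr_ge0.
have hm0 : 0 <= m by rewrite /m ceil_ge0; apply: lt_le_trans (_ : -1 < 0) _;
  [rewrite oppr_lt0 ltr01 | apply: divr_ge0 => //; [exact: sqr_ge0 | exact: ltW]].
have [M hM] : exists M : nat, m = M%:Z by exists `|m|%N; rewrite gez0_abs.
case: (leP n%:Z m) => hnm.
  exists n; split; first by rewrite -PoszM lez_nat leq_pmull.
  exact: ident_case.
rewrite hM.
have [L00 | Lp] := eqVneq L 0.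
  exists 0%N; split; first by rewrite -PoszM lez_nat.
  have w0 : forall i, w i = 0.
    move=> i; apply/normr0_eq0.
    by apply: (psumr_eq0P (P := predT) (F := fun i => `|w i|)) => // j _; exact: normr_ge0.
  apply: (@core R n b w eps 0 (fun _ _ => 0) (fun _ => 0) (fun _ => 0)).
  - by move=> l t; exact: lexx.
  - by case.
  - by move=> x; rewrite big_ord0 big1 // => i _; rewrite w0 mul0r.
  - by move=> x; case.
  - by rewrite big_ord0 ltW.
have Lpos : 0 < L by rewrite lt_def Lp L0.
have hLM : L ^+ 2 / eps <= M%:R.
  have := ceil_ge (L ^+ 2 / eps); rewrite -/m hM; done.
have Mpos : (0 < M)%N.
  case: M hM hLM => // _ hLM0; exfalso.
  have : 0 < L ^+ 2 / eps by apply: divr_gt0 => //; exact: exprn_gt0.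
  by rewrite ltNge hLM0.
set M2 := (M + M)%N.
have M2pos : (0 < M2)%N by rewrite /M2 addn_gt0 Mpos.
pose wp := fun i => Num.max (w i) 0.
pose wn := fun i => Num.max (- w i) 0.
pose v := fun l : 'I_(M2 + M2) => if (l < M2)%N then wp else wn.
pose c := fun l : 'I_(M2 + M2) => if (l < M2)%N then L / M2%:R else - (L / M2%:R).
have hv : forall l i, 0 <= v l i.
  by move=> l i; rewrite /v /wp /wn; case: ifP => _; rewrite le_max lexx orbT.
have hs : forall l, \sum_i v l i <= L.
  move=> l; apply: ler_sum => i _; rewrite /v /wp /wn.
  case: ifP => _; rewrite ge_max normr_ge0 andbT.
    exact: ler_norm.
  by rewrite -normrN ler_norm.
exists (M2 + M2)%N; split.
  by rewrite -PoszM lez_nat /M2 !mulSn mul0n addn0 !addnA.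
apply: (@core R n b w eps (M2 + M2) (fun l => qd L (v l)) c (fun l => c l ^+ 2)).
- by move=> l t; apply: qd_ge0.
- by move=> l; exact: qd_1.
- move=> x; under eq_bigr do rewrite qd_mu.
  rewrite big_split_ord /=.
  have e1 : forall i : 'I_M2, (lshift M2 i < M2)%N by move=> i; rewrite /= ltn_ord.
  have e2 : forall i : 'I_M2, (rshift M2 i < M2)%N = false.
    by move=> i; rewrite /= ltnNge leq_addr.
  have hA : forall u : 'I_n -> R, \sum_i u i / L * (x i)%:R = (\sum_i u i * (x i)%:R) / L.
    by move=> u; rewrite mulr_suml; apply: eq_bigr => i _; rewrite mulrAC.
  rewrite (eq_bigr (fun _ => L / M2%:R * ((\sum_i wp i * (x i)%:R) / L))); last first.
    by move=> i _; rewrite /c /v e1 hA.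
  rewrite [X in _ + X](eq_bigr (fun _ => - (L / M2%:R) * ((\sum_i wn i * (x i)%:R) / L))); last first.
    by move=> i _; rewrite /c /v e2 hA.
  rewrite !sumr_const !card_ord.
  rewrite -[X in X + _ = _]mulr_natr -[X in _ + X = _]mulr_natr.
  have -> : \sum_(i < n) w i * (x i)%:R =
      \sum_i wp i * (x i)%:R - \sum_i wn i * (x i)%:R.
    by rewrite -sumrB; apply: eq_bigr => i _; rewrite -mulrBl /wp /wn wpn.
  have hM2 : (M2%:R : R) != 0 by rewrite pnatr_eq0 -lt0n.
  set A := \sum_i wp i * _; set B := \sum_i wn i * _.
  by field; rewrite Lp hM2.
- by move=> x l; apply: qd_var.
- have -> : \sum_l c l ^+ 2 = \sum_(l < M2 + M2) (L / M2%:R) ^+ 2.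
    by apply: eq_bigr => l _; rewrite /c; case: ifP => _; rewrite ?sqrrN.
  rewrite sumr_const card_ord -[X in X <= _]mulr_natr /M2 !natrD.
  have hMr : (M%:R : R) != 0 by rewrite pnatr_eq0 -lt0n.
  have -> : (L / (M%:R + M%:R)) ^+ 2 * (M%:R + M%:R + (M%:R + M%:R)) = L ^+ 2 / M%:R.
    by field; rewrite hMr -natrD pnatr_eq0 -lt0n addn_gt0 Mpos.
  rewrite ler_pdivrMr ?ltr0n // [eps * _]mulrC -ler_pdivrMr //.
Qed.
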